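(* Let $R,S\in\mathfrak{D}$ and $\mathfrak{D}'\subseteq\mathfrak{D}$, and let $$\mathfrak{G}_{\mathfrak{D}'}(R)=\{\mathcal{G}(\xi):\xi\in\mathcal{H}(G,R),\ G\in\mathfrak{D}'\}.$$ If $\#\mathcal{S}(G,R)\le\#\mathcal{S}(G,S)$ for all $G\in\mathfrak{G}_{\mathfrak{D}'}(R)$, then $R\sqsubseteq_\Gamma S$ with respect to $\mathfrak{D}'$.
   Context: **Digraphs and homomorphisms.** - A digraph $G$ is a pair $(V(G),A(G))$, where $V(G)$ is a finite non-empty set and $A(G)\subseteq V(G)\times V(G)$. Arcs are written $vw$. - An arc $vw$ with $v\ne w$ is proper. - A homomorphism $\xi:G\to H$ is a map $V(G)\to V(H)$ with $\xi(v)\xi(w)\in A(H)$ for all $vw\in A(G)$. $\mathcal{H}(G,H)$ is the set of homomorphisms. - A homomorphism is strict if it maps every proper arc to a proper arc. $\mathcal{S}(G,H)$ is the set of strict homomorphisms. - $\mathfrak{D}$ is the class of all digraphs. **Connectivity.** - Two vertices $u,w$ are adjacent if $uw\in A(G)$ or $wu\in A(G)$. - For $X\subseteq V(G)$ and $v,w\in X$, the vertices $v$ and $w$ are connected in $X$ if $v=w$, or if there are $z_0=v,\dots,z_I=w$ in $X$ with consecutive terms adjacent. - $\gamma_X(v)$ is the set of $w\in X$ connected to $v$ in $X$. - $\Gamma_\xi(v):=\gamma_{\xi^{-1}(\xi(v))}(v)$. **The quotient digraph.** For $\xi\in\mathcal{H}(G,H)$, $\mathcal{G}(\xi)$ is the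 digraph with: - vertex set $\{\Gamma_\xi(v):v\in V(G)\}$; - arcs $\mathfrak{a}\mathfrak{b}$ whenever there are $a\in\mathfrak{a}$, $b\in\mathfrak{b}$ with $ab\in A(G)$. **Schemes.** - For a class $\mathfrak{D}'$, let $\mathfrak{D}'_r$ be a fixed system of representatives up to isomorphism. - A Hom-scheme from $R$ to $S$ with respect to $\mathfrak{D}'$ is a family of maps $\rho_G:\mathcal{H}(G,R)\to\mathcal{H}(G,S)$, $G\in\mathfrak{D}'_r$. - It is strong if all $\rho_G$ are injective. - It is a $\Gamma$-scheme if $\Gamma_{\rho_G(\xi)}(v)=\Gamma_\xi(v)$ for all $G$, $\xi$ and $v$. - $R\sqsubseteq_\Gamma S$ with respect to $\mathfrak{D}'$ means that a strong $\Gamma$-scheme exists. *)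

(* Defs.v *)
From mathcomp Require Import all_boot.
Set Implicit Arguments. Unset Strict Implicit. Unset Printing Implicit Defensive.

Record digraph := Digraph {
  dV : finType;
  dA : rel dV;
  dne : 0 < #|dV| }.

Section Defs.
Variables G H : digraph.

Definition homs : {set {ffun dV G -> dV H}} :=
  [set xi : {ffun dV G -> dV H} | [forall v, forall w, dA v w ==> dA (xi v) (xi w)]].
Definition strict_homs : {set {ffun dV G -> dV H}} :=
  [set xi in homs | [forall v, forall w, (v != w) && dA v w ==> (xi v != xi w)]].

Definition adj_in (X : {set dV G}) : rel (dV G) :=
  fun u w => [&& u \in X, w \in X & dA u w || dA w u].
Definition gamma (X : {set dV G}) (v : dV G) : {set dV G} :=
  [set w in X | connect (adj_in X) v w].

Definition fiber (xi : dV G -> dV H) (v : dV G) : {set dV G} :=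
  [set w | xi w == xi v].
Definition Gam (xi : dV G -> dV H) (v : dV G) : {set dV G} :=
  gamma (fiber xi v) v.

Definition qverts (xi : dV G -> dV H) : {set {set dV G}} :=
  [set Gam xi v | v in [set: dV G]].
Definition qV (xi : dV G -> dV H) : finType :=
  {X : {set dV G} | X \in qverts xi}.
Definition qA (xi : dV G -> dV H) : rel (qV xi) :=
  fun X Y => [exists a in val X, exists b in val Y, dA a b].

Lemma qV_ne (xi : dV G -> dV H) : 0 < #|qV xi|.
Proof.
have /card_gt0P [v _] := dne G.
apply/card_gt0P.
exists (exist (fun X => X \in qverts xi) (Gam xi v) (imset_f _ (in_setT v))).
by [].
Qed.

Definition quot (xi : dV G -> dV H) : digraph := @Digraph (qV xi) (@qA xi) (qV_ne xi).

Definition iso : Prop :=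
  exists f : dV G -> dV H, bijective f /\ forall u v, dA u v = dA (f u) (f v).
End Defs.

Definition rep_system (D' Dr : digraph -> Prop) : Prop :=
  [/\ forall G, Dr G -> D' G,
      forall G, D' G -> exists2 G', Dr G' & iso G G' &
      forall G G', Dr G -> Dr G' -> iso G G' -> G = G'].

Definition strong_Gamma_scheme (Dr : digraph -> Prop) (R S : digraph)
  (rho : forall G : digraph, {ffun dV G -> dV R} -> {ffun dV G -> dV S}) : Prop :=
  forall G, Dr G ->
    [/\ forall xi, xi \in homs G R -> rho G xi \in homs G S,
        {in homs G R &, injective (rho G)} &
        forall xi, xi \in homs G R -> forall v, Gam (rho G xi) v = Gam xi v].

Definition Gamma_sub (Dr : digraph -> Prop) (R S : digraph) : Prop :=
  exists rho, @strong_Gamma_scheme Dr R S rho.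

(* Main.v *)
Require Import Defs.
From mathcomp Require Import all_boot.
Set Implicit Arguments. Unset Strict Implicit. Unset Printing Implicit Defensive.

Lemma connect_restr (T : finType) (e e' : rel T) (P : pred T) x y :
  connect e x y -> P x -> (forall a b, P a -> e a b -> P b /\ e' a b) ->
  connect e' x y /\ P y.
Proof.
move=> /connectP [p pth ->] Px H.
elim: p x pth Px => [|b p IH] x /=; first by move=> _ Px; split.
move=> /andP [exb pth] Px.
have [Pb e'xb] := H _ _ Px exb.
have [c Pl] := IH b pth Pb.
split=> //; exact: (connect_trans (connect1 e'xb) c).
Qed.

Definition injf (T U : finType) (A : {set T}) (B : {set U}) (u0 : U) (x : T) : U :=
  nth u0 (enum B) (index x (enum A)).

Lemma injf_in (T U : finType) (A : {set T}) (B : {set U}) u0 :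
  #|A| <= #|B| -> {in A, forall x, injf A B u0 x \in B}.
Proof.
move=> le x xA; rewrite /injf -mem_enum; apply: mem_nth.
rewrite -cardE; apply: leq_trans le; rewrite cardE index_mem mem_enum //.
Qed.

Lemma injf_inj (T U : finType) (A : {set T}) (B : {set U}) u0 :
  #|A| <= #|B| -> {in A &, injective (injf A B u0)}.
Proof.
move=> le x y xA yA; rewrite /injf => /eqP.
have ix : index x (enum A) < size (enum B) by rewrite -cardE; apply: leq_trans le; rewrite cardE index_mem mem_enum.
have iy : index y (enum A) < size (enum B) by rewrite -cardE; apply: leq_trans le; rewrite cardE index_mem mem_enum.
move: (nth_uniq u0 ix iy (enum_uniq (mem B))) => -> /eqP e.
by have := congr1 (nth x (enum A)) e; rewrite !nth_index ?mem_enum.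
Qed.

Lemma adj_sym (G : digraph) (X : {set dV G}) : symmetric (adj_in X).
Proof. by move=> u w; rewrite /adj_in andbCA orbC. Qed.

Lemma Gam_self (G H : digraph) (xi : dV G -> dV H) v : v \in Gam xi v.
Proof. by rewrite /Gam /gamma inE /fiber inE eqxx connect0. Qed.

Lemma Gam_fib (G H : digraph) (xi : dV G -> dV H) v w : w \in Gam xi v -> xi w = xi v.
Proof. by rewrite /Gam /gamma inE /fiber inE => /andP [/eqP]. Qed.

Lemma Gam_eq (G H : digraph) (xi : dV G -> dV H) v w : w \in Gam xi v -> Gam xi w = Gam xi v.
Proof.
move=> wv; have fw := Gam_fib wv; move: wv.
rewrite /Gam /fiber fw /gamma inE => /andP [_ c].
apply/setP=> u; rewrite !inE; congr (_ && _).
apply/idP/idP => h; first exact: connect_trans c h.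
by apply: connect_trans h; rewrite (sym_connect_sym (@adj_sym G _)).
Qed.

Lemma Gam_core (G H K : digraph) (xi : dV G -> dV H) (phi : dV G -> dV K) :
  (forall v w, w \in Gam xi v -> phi w = phi v) ->
  (forall a b, dA a b -> Gam xi a != Gam xi b -> phi a != phi b) ->
  forall v, Gam phi v = Gam xi v.
Proof.
move=> Ha Hb v; apply/setP => w; apply/idP/idP.
- rewrite {1}/Gam /gamma inE => /andP [wf c].
  have := @connect_restr _ _ (adj_in (fiber xi v)) (mem (Gam xi v)) _ _ c (Gam_self _ _).
  case.
  + move=> a b /= av /andP [af /andP [bf ab]].
    have bv : b \in Gam xi v.
      apply/negPn/negP => bn.
      have nb : Gam xi a != Gam xi b.
        by apply/negP => /eqP e; move: bn; rewrite -(Gam_eq av) e Gam_self.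
      move: af bf; rewrite /fiber !inE => /eqP fa /eqP fb.
      case/orP: ab => ab.
      * by move: (Hb _ _ ab nb); rewrite fa fb eqxx.
      * by move: (Hb _ _ ab); rewrite eq_sym nb fa fb eqxx => /(_ isT).
    split=> //; rewrite /adj_in ab andbT.
    by move: av bv; rewrite /Gam /gamma !inE => /andP [-> _] /andP [-> _].
  + by [].
- rewrite {1}/Gam /gamma inE => /andP [wf c].
  have := @connect_restr _ _ (adj_in (fiber phi v)) (mem (Gam xi v)) _ _ c (Gam_self _ _).
  case.
  + move=> a b /= av /andP [af /andP [bf ab]].
    move: (av); rewrite /Gam /gamma !inE => /andP [_ cva].
    split.
      rewrite (connect_trans cva (connect1 _)) ?andbT.
        by move: bf; rewrite /fiber inE.
      by rewrite /adj_in af bf ab.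
    have bv : b \in Gam xi v.
      rewrite /Gam /gamma inE bf /=; apply: connect_trans cva (connect1 _).
      by rewrite /adj_in af bf ab.
    rewrite /adj_in ab andbT /fiber !inE (Ha _ _ av) (Ha _ _ bv).
    by rewrite eqxx.
  + move=> c' wv; rewrite /Gam /gamma inE /fiber inE (Ha _ _ wv) eqxx /=.
    exact: c'.
Qed.

Lemma Gam_ext (G H H' : digraph) (f : dV G -> dV H) (g : dV G -> dV H') :
  (forall v w, (f v == f w) = (g v == g w)) -> forall v, Gam f v = Gam g v.
Proof.
move=> e v; rewrite /Gam /fiber; congr gamma; apply/setP => w; rewrite !inE; exact: e.
Qed.

Definition proj (G H : digraph) (K : dV G -> dV H) (v : dV G) : qV K :=
  exist (fun X => X \in qverts K) (Gam K v) (imset_f _ (in_setT v)).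

Lemma proj_surj (G H : digraph) (K : dV G -> dV H) (X : qV K) : exists v, X = proj K v.
Proof.
case: X => X XP; have := XP; move=> /imsetP [v _ e].
exists v; apply: val_inj => /=; exact: e.
Qed.

Lemma proj_eq (G H : digraph) (K : dV G -> dV H) v w :
  (proj K v == proj K w) = (Gam K v == Gam K w).
Proof. by []. Qed.

Lemma homsP (G H : digraph) (f : {ffun dV G -> dV H}) :
  reflect (forall v w, dA v w -> dA (f v) (f w)) (f \in homs G H).
Proof.
rewrite /homs inE; apply: (iffP forallP) => h.
- by move=> v w vw; move: (h v) => /forallP /(_ w) /implyP; apply.
- by move=> v; apply/forallP => w; apply/implyP; apply: h.
Qed.

Lemma strictP (G H : digraph) (f : {ffun dV G -> dV H}) :
  reflect ((forall v w, dA v w -> dA (f v) (f w)) /\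
           (forall v w, v != w -> dA v w -> f v != f w)) (f \in strict_homs G H).
Proof.
rewrite /strict_homs inE; apply: (iffP andP) => [[/homsP h1 /forallP h2]|[h1 h2]].
- split=> // v w vw avw; move: (h2 v) => /forallP /(_ w) /implyP; apply.
  by rewrite vw avw.
- split; first by apply/homsP.
  apply/forallP => v; apply/forallP => w; apply/implyP => /andP [vw avw].
  exact: h2.
Qed.

Definition bar (G H H' : digraph) (g0 : dV H') (K : dV G -> dV H) (xi : dV G -> dV H') : {ffun qV K -> dV H'} :=
  [ffun X : qV K => odflt g0 (omap xi [pick x in sval X])].

Lemma bar_proj (G H H' : digraph) (g0 : dV H') (K : dV G -> dV H) (xi : dV G -> dV H') :
  (forall v, Gam K v = Gam xi v) -> forall v, bar g0 K xi (proj K v) = xi v.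
Proof.
move=> e v; rewrite /bar ffunE /=.
case: pickP => [x|] /=; first by rewrite e => /Gam_fib.
by move=> /(_ v); rewrite Gam_self.
Qed.

Lemma bar_strict (G H H' : digraph) (g0 : dV H') (K : dV G -> dV H) (xi : {ffun dV G -> dV H'}) :
  xi \in homs G H' -> (forall v, Gam K v = Gam xi v) -> bar g0 K xi \in strict_homs (quot K) H'.
Proof.
move=> /homsP h e; apply/strictP; split.
- move=> X Y; case: (proj_surj X) => v ->; case: (proj_surj Y) => w ->.
  rewrite !bar_proj // /= /qA /= => /existsP [a /andP [av /existsP [b /andP [bw ab]]]].
  rewrite e in av; rewrite e in bw.
  by rewrite -(Gam_fib av) -(Gam_fib bw); apply: h.
- move=> X Y; case: (proj_surj X) => v ->; case: (proj_surj Y) => w ->.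
  rewrite proj_eq !bar_proj // /= /qA /= => ne /existsP [a /andP [av /existsP [b /andP [bw ab]]]].
  rewrite e in av; rewrite e in bw.
  rewrite -(Gam_fib av) -(Gam_fib bw); apply/eqP => fab.
  move: ne; rewrite !e -(Gam_eq av) -(Gam_eq bw).
  have ba : b \in Gam xi a.
    rewrite /Gam /gamma inE /fiber inE fab eqxx /=; apply: connect1.
    by rewrite /adj_in /fiber !inE fab !eqxx ab.
  by rewrite (Gam_eq ba) eqxx.
Qed.

Definition qlift (G H T : digraph) (K : dV G -> dV H) (tau : {ffun qV K -> dV T}) : {ffun dV G -> dV T} :=
  [ffun v => tau (proj K v)].

Lemma lift_hom (G H T : digraph) (K : dV G -> dV H) (tau : {ffun qV K -> dV T}) :
  tau \in strict_homs (quot K) T -> qlift tau \in homs G T.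
Proof.
move=> /strictP [h _]; apply/homsP => v w vw; rewrite !ffunE; apply: h.
apply/existsP; exists v; rewrite Gam_self /=; apply/existsP; exists w; by rewrite Gam_self.
Qed.

Lemma lift_Gam (G H T : digraph) (K : dV G -> dV H) (tau : {ffun qV K -> dV T}) :
  tau \in strict_homs (quot K) T -> forall v, Gam (qlift tau) v = Gam K v.
Proof.
move=> /strictP [_ h] v.
rewrite (@Gam_ext _ _ _ (qlift tau) (fun v => tau (proj K v))); last by move=> ??; rewrite !ffunE.
apply: Gam_core.
- move=> x y yx; congr (tau _); apply/eqP; rewrite proj_eq (Gam_eq yx) //.
- move=> a b ab ne; apply: h; first by rewrite proj_eq.
  apply/existsP; exists a; rewrite Gam_self /=; apply/existsP; exists b; by rewrite Gam_self.
Qed.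

Definition star (G R : digraph) (xi : {ffun dV G -> dV R}) : {ffun dV G -> dV R} :=
  odflt xi [pick x in homs G R | [forall v, Gam x v == Gam xi v]].

Lemma star_spec (G R : digraph) (xi : {ffun dV G -> dV R}) :
  xi \in homs G R -> star xi \in homs G R /\ forall v, Gam (star xi) v = Gam xi v.
Proof.
move=> h; rewrite /star; case: pickP => [x /andP [hx /forallP e]|] /=.
- by split=> // v; apply/eqP.
- by split.
Qed.

Lemma star_eq (G R : digraph) (x1 x2 : {ffun dV G -> dV R}) :
  x1 \in homs G R -> (forall v, Gam x1 v = Gam x2 v) -> star x1 = star x2.
Proof.
move=> h1 e; rewrite /star.
have -> : [pick x in homs G R | [forall v, Gam x v == Gam x2 v]] =
          [pick x in homs G R | [forall v, Gam x v == Gam x1 v]].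
  by apply: eq_pick => x /=; congr (_ && _); apply: eq_forallb => v; rewrite e.
case: pickP => [//|] /(_ x1); rewrite /= h1 /=.
by have -> : [forall v, Gam x1 v == Gam x1 v] by apply/forallP => v.
Qed.

Definition rho (R S : digraph) (r0 : dV R) (s0 : dV S) (G : digraph) (xi : {ffun dV G -> dV R})
  : {ffun dV G -> dV S} :=
  qlift (injf (strict_homs (quot (star xi)) R) (strict_homs (quot (star xi)) S)
             [ffun _ => s0] (bar r0 (star xi) xi)).

Theorem lemma4 (R S : digraph) (D' Dr : digraph -> Prop) :
  rep_system D' Dr ->
  (forall (G : digraph) (xi : {ffun dV G -> dV R}), D' G -> xi \in homs G R ->
     #|strict_homs (quot xi) R| <= #|strict_homs (quot xi) S|) ->
  Gamma_sub Dr R S.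
Proof.
move=> [DrD' _ _] Hc.
have /card_gt0P [r0 _] := dne R.
have /card_gt0P [s0 _] := dne S.
exists (rho r0 s0) => G DrG.
have card xi : xi \in homs G R ->
   #|strict_homs (quot (star xi)) R| <= #|strict_homs (quot (star xi)) S|.
  by move=> h; apply: Hc (DrD' _ DrG) _; case: (star_spec h).
have barS xi : xi \in homs G R -> bar r0 (star xi) xi \in strict_homs (quot (star xi)) R.
  by move=> h; case: (star_spec h) => _ e; apply: bar_strict.
have injS xi : xi \in homs G R ->
   injf (strict_homs (quot (star xi)) R) (strict_homs (quot (star xi)) S)
             [ffun _ => s0] (bar r0 (star xi) xi) \in strict_homs (quot (star xi)) S.
  by move=> h; apply: injf_in (card _ h) _ (barS _ h).
have GamE xi : xi \in homs G R -> forall v, Gam (rho r0 s0 xi) v = Gam xi v.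
  move=> h v; rewrite /rho lift_Gam; last exact: injS.
  by case: (star_spec h).
split.
- by move=> xi h; apply: lift_hom; apply: injS.
- move=> x1 x2 h1 h2 e.
  have eG v : Gam x1 v = Gam x2 v by rewrite -GamE // e GamE.
  have st := star_eq h1 eG.
  have [_ eK] := star_spec h2.
  have b1 := barS _ h1. have b2 := barS _ h2.
  move: e b1; rewrite /rho st => e b1.
  have e' : injf (strict_homs (quot (star x2)) R) (strict_homs (quot (star x2)) S)
             [ffun _ => s0] (bar r0 (star x2) x1) =
            injf (strict_homs (quot (star x2)) R) (strict_homs (quot (star x2)) S)
             [ffun _ => s0] (bar r0 (star x2) x2).
    apply/ffunP => X; case: (proj_surj X) => v ->.
    by move: (congr1 (fun f : {ffun dV G -> dV S} => f v) e); rewrite /qlift !ffunE.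
  have eb := injf_inj (card _ h2) b1 b2 e'.
  apply/ffunP => v.
  rewrite -(@bar_proj _ _ _ r0 (star x2) x1) ?eb ?bar_proj //.
  by move=> w; rewrite eK eG.
- exact: GamE.
Qed.
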